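(* Assume the subgraph $\mathcal G_{\sigma(t)}$ is undirected for all $t\ge0$, and that there exist $T_{\mathrm c}>0$ and a subsequence $\{t_{j_k}:k=0,1,2,\dots\}$ of the switching instants with $t_{j_0}=0$ and $t_{j_{k+1}}-t_{j_k}\le T_{\mathrm c}$, such that for every $k$ every node $i\in\{1,\dots,N\}$ is reachable from node $0$ in the union graph $\bigcup_{t_j\in[t_{j_k},t_{j_{k+1}})}\bar{\mathcal G}_{\sigma(t_j)}$. Then there exists $0<\delta<1$ such that for every positive integer $\ell$, $$\left\|\prod_{r=j_k}^{j_{k+\ell}-1}P_{\sigma(t_r)}\right\|\le\delta^{\ell}\quad\text{for all }k=0,1,2,\dots.$$
   Context: $\sigma:[0,\infty)\to\mathcal P=\{1,\dots,n_0\}$ is a piecewise constant switching signal: there are switching instants $0=t_0<t_1<\cdots$ and a dwell time $\tau>0$ with $t_{j+1}-t_j\ge\tau$, and $\sigma$ is constant on each $[t_j,t_{j+1})$. For each $p\in\mathcal P$, $\bar{\mathcal G}_p$ is a graph on nodes $\{0,1,\dots,N\}$ with edge set $\bar{\mathcal E}_p$ of ordered pairs $(j,i)$, $j\ne i$; $a_{ij}(t)=1$ if $(j,i)\in\bar{\mathcal E}_{\sigma(t)}$, else $0$. $\mathcal G_{\sigma(t)}$ is the subgraph on $\{1,\dots,N\}$ with the edges of $\bar{\mathcal E}_{\sigma(t)}$ among those nodes (undirected: $(i,j)$ edge iff $(j,i)$ edge), with Laplacian $\mathcal L_{\sigma(t)}$ ($l_{ii}=\sum_{j=1}^Na_{ij}(t)$,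 $l_{ij}=-a_{ij}(t)$, $i\ne j$). $\Delta_{\sigma(t)}=\mathrm{diag}(a_{10}(t),\dots,a_{N0}(t))$, $\mathcal H_{\sigma(t)}=\mathcal L_{\sigma(t)}+\Delta_{\sigma(t)}$, and $P_{\sigma(t)}$ is the orthogonal projection of $\mathbb{R}^N$ onto $\ker\mathcal H_{\sigma(t)}$ (zero matrix if the kernel is trivial). Node $i$ is reachable from $0$ if the graph has edges $(0,i_2),(i_2,i_3),\dots,(i_s,i)$; the union graph has the union of edge sets. $\prod_{r=m}^n\Xi_r=\Xi_n\cdots\Xi_m$. $\|\cdot\|$ is the matrix norm induced by the Euclidean norm. *)

(* Defs.v *)
From HB Require Import structures.
From mathcomp Require Import all_boot all_order all_algebra.
From mathcomp Require Import classical_sets reals.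
Set Implicit Arguments. Unset Strict Implicit. Unset Printing Implicit Defensive.
Import Order.TTheory GRing.Theory Num.Theory.
Local Open Scope ring_scope.
Local Open Scope classical_set_scope.

Section Defs.
Variable R : realType.

Definition dotv (N : nat) (x y : 'cV[R]_N) : R := \sum_(i < N) x i 0 * y i 0.
Definition enorm (N : nat) (x : 'cV[R]_N) : R := Num.sqrt (dotv x x).

Definition opnorm (N : nat) (A : 'M[R]_N) : R :=
  sup [set enorm (A *m x) | x in [set x : 'cV[R]_N | enorm x <= 1]].

Definition is_orth_proj (N : nat) (P : 'M[R]_N) (S : set 'cV[R]_N) : Prop :=
  forall x : 'cV[R]_N, S (P *m x) /\ (forall y, S y -> dotv (x - P *m x) y = 0).

(* Graphs on nodes {0,...,N} = 'I_N.+1; E j i means (j,i) is an edge.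
   Follower node i (1 <= i <= N) is lift ord0 i for i : 'I_N. *)
Definition node (N : nat) (i : 'I_N) : 'I_N.+1 := lift ord0 i.

Definition adj (N : nat) (E : rel 'I_N.+1) (i j : 'I_N.+1) : R := (E j i)%:R.

Definition laplacian (N : nat) (E : rel 'I_N.+1) : 'M[R]_N :=
  \matrix_(i, j) (if i == j then \sum_(l < N) adj E (node i) (node l)
                  else - adj E (node i) (node j)).

Definition leader_diag (N : nat) (E : rel 'I_N.+1) : 'M[R]_N :=
  \matrix_(i, j) (if i == j then adj E (node i) ord0 else 0).

Definition Hmat (N : nat) (E : rel 'I_N.+1) : 'M[R]_N :=
  laplacian E + leader_diag E.

Definition kerH (N : nat) (E : rel 'I_N.+1) : set 'cV[R]_N :=
  [set x | Hmat E *m x = 0].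

(* ordered product  F (n-1) * ... * F m  *)
Definition lprod (N : nat) (F : nat -> 'M[R]_N) (m n : nat) : 'M[R]_N :=
  foldl (fun A r => F r *m A) 1%:M (index_iota m n).

End Defs.

Definition union_rel (n0 N : nat) (E : 'I_n0 -> rel 'I_N.+1) (s : nat -> 'I_n0)
  (m n : nat) : rel 'I_N.+1 :=
  fun a b => has (fun r => E (s r) a b) (index_iota m n).

(* Main.v *)
Require Import Defs.
From HB Require Import structures.
From mathcomp Require Import all_boot all_order all_algebra.
From mathcomp Require Import classical_sets reals.
From mathcomp Require Import lra zify ring.
Import Order.TTheory GRing.Theory Num.Theory.
Set Implicit Arguments. Unset Strict Implicit. Unset Printing Implicit Defensive.
Local Open Scope ring_scope.

Section Basic.
Variable R : realType.
Variable N : nat.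
Implicit Types x y u v w : 'cV[R]_N.
Implicit Types A B : 'M[R]_N.

Definition q x := dotv x x.
Definition n1 x := \sum_(i < N) `|x i 0|.
Definition bA A := \sum_(i < N) \sum_(j < N) `|A i j|.

Lemma dotvE u v : dotv u v = (u^T *m v) 0 0.
Proof. by rewrite /dotv mxE; apply: eq_bigr => i _; rewrite mxE. Qed.

Lemma dotvC u v : dotv u v = dotv v u.
Proof. by rewrite /dotv; apply: eq_bigr => i _; rewrite mulrC. Qed.

Lemma dotvDl u v w : dotv (u + v) w = dotv u w + dotv v w.
Proof. by rewrite /dotv -big_split; apply: eq_bigr => i _; rewrite mxE mulrDl. Qed.

Lemma dotvNl u w : dotv (- u) w = - dotv u w.
Proof. by rewrite /dotv -sumrN; apply: eq_bigr => i _; rewrite mxE mulNr. Qed.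

Lemma dotvBl u v w : dotv (u - v) w = dotv u w - dotv v w.
Proof. by rewrite dotvDl dotvNl. Qed.

Lemma dotvDr u v w : dotv w (u + v) = dotv w u + dotv w v.
Proof. by rewrite !(dotvC w) dotvDl. Qed.

Lemma dotvBr u v w : dotv w (u - v) = dotv w u - dotv w v.
Proof. by rewrite !(dotvC w) dotvBl. Qed.

Lemma dotv_tr A u v : dotv u (A^T *m v) = dotv (A *m u) v.
Proof. by rewrite !dotvE trmx_mul mulmxA. Qed.

Lemma q_ge0 x : 0 <= q x.
Proof. by apply: sumr_ge0 => i _; rewrite -expr2 sqr_ge0. Qed.

Lemma q_eq0 x : q x = 0 -> x = 0.
Proof.
move=> /eqP; rewrite /q /dotv psumr_eq0 => [/allP H|i _]; last by rewrite -expr2 sqr_ge0.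
apply/matrixP => i j; rewrite (ord1 j) mxE.
have := H i (mem_index_enum _); rewrite /= -expr2 sqrf_eq0 => /eqP //.
Qed.

Lemma coord_le x i : `|x i 0| <= Num.sqrt (q x).
Proof.
rewrite -sqrtr_sqr ler_wsqrtr // /q /dotv (bigD1 i) //= -expr2 lerDl.
by apply: sumr_ge0 => j _; rewrite -expr2 sqr_ge0.
Qed.

Lemma n1_ge0 x : 0 <= n1 x.
Proof. by apply: sumr_ge0. Qed.

Lemma coord_le_n1 x i : `|x i 0| <= n1 x.
Proof.
by rewrite /n1 (bigD1 i) //= lerDl; apply: sumr_ge0.
Qed.

Lemma n1_le_sqrt x : n1 x <= N%:R * Num.sqrt (q x).
Proof.
apply: (@le_trans _ _ (\sum_(i < N) Num.sqrt (q x))); last by rewrite sumr_const card_ord mulr_natl.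
by apply: ler_sum => i _; apply: coord_le.
Qed.

Lemma q_le_n1 x : q x <= n1 x ^+ 2.
Proof.
rewrite expr2 {2}/n1 mulr_sumr /q /dotv; apply: ler_sum => i _.
apply: le_trans (ler_norm _) _; rewrite normrM.
by apply: ler_wpM2r => //; apply: coord_le_n1.
Qed.

Lemma n1D x y : n1 (x + y) <= n1 x + n1 y.
Proof. by rewrite /n1 -big_split; apply: ler_sum => i _; rewrite mxE ler_normD. Qed.

Lemma n1N x : n1 (- x) = n1 x.
Proof. by apply: eq_bigr => i _; rewrite mxE normrN. Qed.

Lemma bA_ge0 A : 0 <= bA A.
Proof. by apply: sumr_ge0 => i _; apply: sumr_ge0. Qed.

Lemma n1_mul A x : n1 (A *m x) <= bA A * n1 x.
Proof.
rewrite /n1 /bA mulr_suml; apply: ler_sum => i _.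
rewrite mxE mulr_suml; apply: le_trans (ler_norm_sum _ _ _) _.
apply: ler_sum => j _; rewrite normrM; apply: ler_wpM2l => //.
exact: coord_le_n1.
Qed.

Lemma n1_sum (I : finType) (S : pred I) (F : I -> 'cV[R]_N) :
  n1 (\sum_(i | S i) F i) <= \sum_(i | S i) n1 (F i).
Proof.
elim/big_ind2: _ => //; first by rewrite /n1 big1 // => i _; rewrite mxE normr0.
by move=> a b c d H1 H2; apply: le_trans (n1D _ _) _; apply: lerD.
Qed.

Lemma pythag (P : 'M[R]_N) S x : is_orth_proj P S -> q x = q (P *m x) + q (x - P *m x).
Proof.
move=> /(_ x) [HS Hort]; have H0 := Hort _ HS.
have -> : q x = q (P *m x + (x - P *m x)) by rewrite addrC subrK.
move: H0; set y := x - P *m x => H0; clearbody y.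
rewrite /q dotvDl !dotvDr (dotvC (P *m x) y) H0.
by rewrite addr0 add0r.
Qed.


Lemma Hx_entry (E : rel 'I_N.+1) x i : ~~ E (node i) (node i) ->
  (Hmat R E *m x) i 0 = \sum_j adj R E (node i) (node j) * (x i 0 - x j 0)
                      + adj R E (node i) ord0 * x i 0.
Proof.
move=> Hirr; rewrite /Hmat mulmxDl mxE; congr (_ + _).
  rewrite mxE (bigD1 i) //= !mxE eqxx.
  under eq_bigr => j Hj do rewrite !mxE eq_sym (negbTE Hj).
  rewrite (bigD1 i) //= [in RHS](bigD1 i) //= subrr mulr0 add0r.
  have -> : adj R E (node i) (node i) = 0 by rewrite /adj (negbTE Hirr).
  rewrite add0r mulr_suml -big_split /=; apply: eq_bigr => j _.
  by rewrite mulrBr mulNr.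
rewrite mxE (bigD1 i) //= mxE eqxx big1 ?addr0 // => j Hj.
by rewrite mxE eq_sym (negbTE Hj) mul0r.
Qed.


Section Graph.
Variables (n0 : nat) (E : 'I_n0 -> rel 'I_N.+1) (s : nat -> 'I_n0) (m n : nat).
Hypothesis Hirr : forall p i, ~~ E p i i.

Lemma ker_nonpos x :
  (forall r, r \in index_iota m n -> Hmat R (E (s r)) *m x = 0) ->
  (forall i, connect (union_rel E s m n) ord0 (node i)) ->
  forall i, x i 0 <= 0.
Proof.
move=> Hker Hreach i0.
case: (@arg_maxP _ _ _ i0 xpredT (fun k => x k 0) isT) => j _ Hj.
set M := x j 0 in Hj.
rewrite leNgt; apply/negP => Hpos.
have HM : 0 < M by apply: lt_le_trans Hpos (Hj _ isT).
pose inS (v : 'I_N.+1) := [exists k : 'I_N, (v == node k) && (x k 0 == M)].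
have Hcl : forall a b, union_rel E s m n a b -> inS b -> inS a.
  move=> a b /hasP [r Hr Hab] /existsP [k /andP [/eqP Hb /eqP Hk]].
  have := congr1 (fun A : 'cV_N => A k 0) (Hker r Hr).
  have HF : forall l, true -> 0 <= adj R (E (s r)) (node k) (node l) * (x k 0 - x l 0).
    by move=> l _; rewrite /adj mulr_ge0 // subr_ge0 Hk; exact: Hj.
  rewrite Hx_entry ?Hirr // mxE => /eqP.
  rewrite paddr_eq0; first last.
  - by rewrite /adj mulr_ge0 // Hk ltW.
  - by apply: sumr_ge0 => l _; apply: HF.
  case/andP => /eqP Hsum /eqP H0.
  case: (unliftP ord0 a) => [j' Ha|Ha].
    apply/existsP; exists j'; rewrite Ha eqxx /=.
    have := @psumr_eq0P _ _ _ _ HF Hsum j' isT.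
    rewrite /adj -Hb /node -Ha Hab /= mul1r Hk => /eqP; rewrite subr_eq0 eq_sym => /eqP ->.
    by rewrite eqxx.
  move: H0; rewrite /adj -Hb /node -Ha Hab /= mul1r Hk => H0.
  by move: HM; rewrite H0 ltxx.
have : inS (node j) by apply/existsP; exists j; rewrite !eqxx.
have Hgen : forall a p, path (union_rel E s m n) a p -> inS (last a p) -> inS a.
  move=> a p; elim: p a => [|c p IH] a //=.
  case/andP => Hac Hp Hl; exact: (Hcl a c Hac (IH c Hp Hl)).
case/connectP: (Hreach j) => p Hp Hlast.
rewrite Hlast => /(Hgen _ _ Hp) /existsP [k /andP [/eqP Hk _]].
by move: (neq_lift ord0 k); rewrite -/(node k) -Hk eqxx.
Qed.

Lemma ker_zero x :
  (forall r, r \in index_iota m n -> Hmat R (E (s r)) *m x = 0) ->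
  (forall i, connect (union_rel E s m n) ord0 (node i)) -> x = 0.
Proof.
move=> Hk Hr; apply/matrixP => i j; rewrite (ord1 j) mxE.
apply/eqP; rewrite eq_le ker_nonpos //= -oppr_le0.
have -> : - x i 0 = (- x) i 0 by rewrite mxE.
apply: ker_nonpos => // r Hr'; by rewrite mulmxN Hk // oppr0.
Qed.

End Graph.

Section Lprod.
Variable F : nat -> 'M[R]_N.

Lemma lprod_nil a : lprod F a a = 1%:M.
Proof. by rewrite /lprod /index_iota subnn. Qed.

Lemma foldl_mul (l : seq nat) (A : 'M[R]_N) :
  foldl (fun B r => F r *m B) A l = foldl (fun B r => F r *m B) 1%:M l *m A.
Proof.
elim: l A => [|r l IH] A /=; first by rewrite mul1mx.
by rewrite IH [in RHS]IH mulmx1 mulmxA.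
Qed.

Lemma lprod_split a b c : (a <= b)%N -> (b <= c)%N ->
  lprod F a c = lprod F b c *m lprod F a b.
Proof.
move=> Hab Hbc; rewrite /lprod /index_iota.
have -> : (c - a = (b - a) + (c - b))%N by lia.
by rewrite iotaD foldl_cat foldl_mul; congr (foldl _ _ (iota _ _) *m _); lia.
Qed.

Lemma lprodS a b : (a <= b)%N -> lprod F a b.+1 = F b *m lprod F a b.
Proof.
move=> Hab; rewrite (lprod_split Hab (leqnSn b)); congr (_ *m _).
by rewrite /lprod /index_iota subSn // subnn /= mulmx1.
Qed.
End Lprod.


Lemma le_sum_term (I : finType) (Q : pred I) (G : I -> R) i :
  (forall j, 0 <= G j) -> Q i -> G i <= \sum_(j | Q j) G j.
Proof. by move=> H Qi; rewrite (bigD1 i) //= lerDl sumr_ge0. Qed.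

Section Window.
Variables (n0 : nat) (E : 'I_n0 -> rel 'I_N.+1) (P : 'I_n0 -> 'M[R]_N) (s : nat -> 'I_n0).
Hypothesis Hirr : forall p i, ~~ E p i i.
Hypothesis Hproj : forall p, is_orth_proj (P p) (kerH (E p)).

Definition Hm p := Hmat R (E p).
Definition Gm (W : {set 'I_n0}) := \sum_(p in W) (Hm p)^T *m Hm p.
Definition kap := \sum_(W : {set 'I_n0}) bA (invmx (Gm W)).
Definition bet := \sum_(p : 'I_n0) bA (Hm p).
Definition bet' := \sum_(p : 'I_n0) bA (Hm p)^T.

Lemma Gm_tr W : (Gm W)^T = Gm W.
Proof.
rewrite /Gm raddf_sum; apply: eq_bigr => p _.
by rewrite /= trmx_mul trmxK.
Qed.

Lemma dotv_Gm W x : dotv x (Gm W *m x) = \sum_(p in W) q (Hm p *m x).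
Proof.
rewrite /Gm mulmx_suml /dotv.
under eq_bigr => i _ do rewrite summxE mulr_sumr.
rewrite exchange_big /=; apply: eq_bigr => p _.
by rewrite -mulmxA -/(dotv _ _) dotv_tr.
Qed.


Lemma sum_sub_le (I : finType) (W : pred I) (G : I -> R) :
  (forall j, 0 <= G j) -> \sum_(j | W j) G j <= \sum_j G j.
Proof. by move=> H; rewrite [X in _ <= X](bigID W) /= lerDl sumr_ge0. Qed.

Lemma n1_0 : n1 (0 : 'cV[R]_N) = 0.
Proof. by rewrite /n1 big1 // => i _; rewrite mxE normr0. Qed.

Lemma window m n L x :
  (m <= n)%N -> (n - m <= L)%N ->
  (forall i, connect (union_rel E s m n) ord0 (node i)) ->
  q x <= ((kap * bet' * bet * L%:R * N%:R) ^+ 2 + 2) *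
         (q x - q (lprod (fun r => P (s r)) m n *m x)).
Proof.
move=> Hmn HL Hreach.
set F := fun r => P (s r).
pose y r := lprod F m r *m x.
have ym : y m = x by rewrite /y lprod_nil mul1mx.
have yS : forall r, (m <= r)%N -> y r.+1 = P (s r) *m y r.
  by move=> r Hr; rewrite /y lprodS // mulmxA.
have Hpy : forall r, (m <= r)%N -> q (y r) = q (y r.+1) + q (y r - y r.+1).
  by move=> r Hr; rewrite yS //; apply: pythag (Hproj (s r)).
have Hmono : forall a b, (m <= a)%N -> (a <= b)%N -> q (y b) <= q (y a).
  move=> a b Ha; elim: b => [|b IH]; first by rewrite leqn0 => /eqP ->.
  rewrite leq_eqVlt => /orP [/eqP <-|Hab]; first by [].
  apply: le_trans (IH Hab); rewrite (Hpy b) ?lerDl ?q_ge0 //; lia.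
rewrite -/(y n).
set D := q x - q (y n).
have D0 : 0 <= D by rewrite subr_ge0 -{1}ym; apply: Hmono.
have Hd : forall r, (m <= r)%N -> (r < n)%N -> n1 (y r - y r.+1) <= N%:R * Num.sqrt D.
  move=> r H1 H2; apply: le_trans (n1_le_sqrt _) _; apply: ler_wpM2l => //.
  apply: ler_wsqrtr.
  have := Hpy r H1; have := Hmono m r (leqnn m) H1; have := Hmono r.+1 n (leqW H1) H2.
  rewrite ym /D; lra.
have Hxy : forall k, (m + k <= n)%N -> n1 (x - y (m + k)%N) <= k%:R * (N%:R * Num.sqrt D).
  elim => [|k IH] Hk; first by rewrite addn0 ym subrr n1_0 mul0r.
  have -> : x - y (m + k.+1)%N = (x - y (m + k)%N) + (y (m + k)%N - y (m + k).+1).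
    by rewrite addnS addrA subrK.
  apply: le_trans (n1D _ _) _; rewrite mulrSr mulrDl mul1r.
  apply: lerD; first by apply: IH; lia.
  apply: Hd; lia.
set B := bet * L%:R * (N%:R * Num.sqrt D).
have B0 : 0 <= B by rewrite /B !mulr_ge0 // ?sqrtr_ge0 // sumr_ge0 // => p _; apply: bA_ge0.
have HHx : forall r, (m <= r)%N -> (r < n)%N -> n1 (Hm (s r) *m x) <= B.
  move=> r H1 H2.
  have Hz : Hm (s r) *m y r.+1 = 0 by rewrite yS //; exact: (Hproj (s r) (y r)).1.
  have -> : Hm (s r) *m x = Hm (s r) *m (x - y r.+1) by rewrite mulmxBr Hz subr0.
  apply: le_trans (n1_mul _ _) _; rewrite /B -mulrA.
  apply: ler_pM => //; first exact: bA_ge0; first exact: n1_ge0.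
    by rewrite /bet (bigD1 (s r)) //= lerDl sumr_ge0 // => p _; apply: bA_ge0.
  have -> : r.+1 = (m + (r.+1 - m))%N by lia.
  apply: le_trans (Hxy _ _) _; first lia.
  apply: ler_wpM2r; first by rewrite mulr_ge0 // sqrtr_ge0.
  rewrite ler_nat; lia.
set W := [set p | has (fun r => s r == p) (index_iota m n)].
have HW : forall p, p \in W -> n1 (Hm p *m x) <= B.
  move=> p; rewrite inE => /hasP [r Hr /eqP <-]; move: Hr; rewrite mem_index_iota.
  by case/andP; apply: HHx.
have Hunit : Gm W \in unitmx.
  rewrite unitmxE unitfE; apply/negP => /det0P [v Hv0 Hv].
  have Hz : Gm W *m v^T = 0 by rewrite -{1}Gm_tr -trmx_mul Hv trmx0.
  have Hs : \sum_(p in W) q (Hm p *m v^T) = 0.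
    by rewrite -dotv_Gm Hz /dotv big1 // => i _; rewrite !mxE mulr0.
  have Hk : forall r, r \in index_iota m n -> Hmat R (E (s r)) *m v^T = 0.
    move=> r Hr; apply: q_eq0; apply: (@psumr_eq0P _ _ _ _ _ Hs).
      by move=> p _; apply: q_ge0.
    by rewrite inE; apply/hasP; exists r.
  have := ker_zero Hirr Hk Hreach => /(congr1 trmx); rewrite trmxK trmx0 => Hv'.
  by rewrite Hv' eqxx in Hv0.
have HGx : n1 (Gm W *m x) <= bet' * B.
  rewrite /Gm mulmx_suml; apply: le_trans (n1_sum (fun p => p \in W) _) _.
  apply: (@le_trans _ _ (\sum_(p in W) bA (Hm p)^T * B)).
    apply: ler_sum => p Hp; rewrite -mulmxA; apply: le_trans (n1_mul _ _) _.
    by apply: ler_wpM2l; [apply: bA_ge0 | apply: HW].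
  rewrite -mulr_suml; apply: ler_wpM2r => //.
  by apply: sum_sub_le => p; apply: bA_ge0.
have Hx1 : n1 x <= kap * (bet' * B).
  rewrite -{1}(mulKmx Hunit x); apply: le_trans (n1_mul _ _) _.
  apply: ler_pM => //; [exact: bA_ge0 | exact: n1_ge0 | ].
  by rewrite /kap (bigD1 W) //= lerDl sumr_ge0 // => W0 _; apply: bA_ge0.
rewrite (_ : kap * (bet' * B) = kap * bet' * bet * L%:R * N%:R * Num.sqrt D) in Hx1; last first.
  by rewrite /B; ring.
set K := kap * bet' * bet * L%:R * N%:R in Hx1 *.
apply: le_trans (q_le_n1 x) _.
apply: (@le_trans _ _ ((K * Num.sqrt D) ^+ 2)).
  by rewrite !expr2; apply: ler_pM => //; apply: n1_ge0.
by rewrite exprMn sqr_sqrtr // mulrDl lerDl mulr_ge0.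
Qed.

End Window.
End Basic.

Unset Implicit Arguments.
Unset Strict Implicit.

Theorem corollary1 (R : realType) (n0 N : nat)
  (E : 'I_n0 -> rel 'I_N.+1)
  (P : 'I_n0 -> 'M[R]_N)
  (t : nat -> R) (tau : R) (sigma : R -> 'I_n0)
  (Tc : R) (jk : nat -> nat) :
  (* edges are ordered pairs (j,i) with j <> i *)
  (forall p i, ~~ E p i i) ->
  (* P_p is the orthogonal projection onto ker H_p *)
  (forall p, is_orth_proj (P p) (kerH (E p))) ->
  (* switching instants with dwell time tau *)
  t 0%N = 0 -> 0 < tau -> (forall j, tau <= t j.+1 - t j) ->
  (* sigma is constant on each [t_j, t_{j+1}) *)
  (forall j s, t j <= s -> s < t j.+1 -> sigma s = sigma (t j)) ->
  (* the subgraph G_sigma(t) is undirected for all t >= 0 *)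
  (forall s, 0 <= s -> forall i j : 'I_N,
      E (sigma s) (node j) (node i) = E (sigma s) (node i) (node j)) ->
  (* subsequence of switching instants *)
  0 < Tc -> jk 0%N = 0%N -> (forall k, (jk k < jk k.+1)%N) ->
  (forall k, t (jk k.+1) - t (jk k) <= Tc) ->
  (* joint reachability from node 0 in each union graph *)
  (forall k (i : 'I_N),
      connect (union_rel E (fun r => sigma (t r)) (jk k) (jk k.+1)) ord0 (node i)) ->
  exists delta : R, 0 < delta /\ delta < 1 /\
    forall l k : nat, (0 < l)%N ->
      opnorm (lprod (fun r => P (sigma (t r))) (jk k) (jk (k + l)%N)) <= delta ^+ l.
Proof.
move=> Hirr Hproj _ Htau Hdw _ _ HTc0 _ Hinc HTc Hreach.
set s := fun r => sigma (t r).
have Ht : forall j d, d%:R * tau <= t (j + d)%N - t j.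
  move=> j; elim => [|d IH]; first by rewrite addn0 subrr mul0r.
  rewrite addnS mulrSr mulrDl mul1r.
  have := Hdw (j + d)%N; lra.
set L := Num.Def.archi_bound (Tc / tau).
have HL : forall k, (jk k.+1 - jk k <= L)%N.
  move=> k; have Hk := Hinc k.
  have := Ht (jk k) (jk k.+1 - jk k)%N.
  rewrite subnKC; last exact: ltnW.
  move=> H1; have H2 := le_trans H1 (HTc k).
  have H3 : (jk k.+1 - jk k)%:R <= Tc / tau by rewrite ler_pdivlMr.
  have H4 : 0 <= Tc / tau := divr_ge0 (ltW HTc0) (ltW Htau).
  have := le_lt_trans H3 (archi_boundP H4); rewrite ltr_nat => H5.
  exact: ltnW.
set C := (kap R E * bet' R E * bet R E * L%:R * N%:R) ^+ 2 + 2.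
have C2 : 2 <= C by rewrite /C lerDr sqr_ge0.
have C0 : 0 < C by apply: lt_le_trans C2.
set rho := 1 - C^-1.
have rho0 : 0 < rho.
  rewrite /rho subr_gt0 invf_lt1 //; apply: lt_le_trans C2; lra.
have rho1 : rho < 1 by rewrite /rho ltrBlDr ltrDl invr_gt0.
have jk_mono : forall a b, (a <= b)%N -> (jk a <= jk b)%N.
  move=> a b; elim: b => [|b IH]; first by rewrite leqn0 => /eqP ->.
  rewrite leq_eqVlt => /orP [/eqP ->|Hab] //.
  exact: leq_trans (IH Hab) (ltnW (Hinc b)).
have Hwin : forall k x, enorm (lprod (fun r => P (s r)) (jk k) (jk k.+1) *m x)
                        <= Num.sqrt rho * enorm x.
  move=> k x; rewrite /enorm -sqrtrM ?(ltW rho0) //; apply: ler_wsqrtr.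
  have := window Hirr Hproj x (ltnW (Hinc k)) (HL k) (Hreach k).
  rewrite -/C -!/(q _) => H.
  have H' : q x / C <= q x - q (lprod (fun r => P (s r)) (jk k) (jk k.+1) *m x).
    by rewrite ler_pdivrMr // mulrC.
  rewrite /rho mulrBl mul1r mulrC; lra.
have Hall : forall l k x, enorm (lprod (fun r => P (s r)) (jk k) (jk (k + l)%N) *m x)
                          <= Num.sqrt rho ^+ l * enorm x.
  elim => [|l IH] k x.
    by rewrite addn0 lprod_nil mul1mx expr0 mul1r.
  rewrite addnS (lprod_split _ (jk_mono k (k + l)%N (leq_addr _ _)) (ltnW (Hinc _))).
  rewrite -mulmxA; apply: le_trans (Hwin _ _) _.
  rewrite exprS -mulrA; apply: ler_wpM2l; first exact: sqrtr_ge0.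
  exact: IH.
exists (Num.sqrt rho); split; first by rewrite sqrtr_gt0.
split; first by rewrite -sqrtr1 ltr_sqrt.
move=> l k _; apply: ge_sup.
  exists (enorm (lprod (fun r => P (s r)) (jk k) (jk (k + l)%N) *m 0)); exists 0 => //.
  by rewrite /= /enorm /dotv big1 ?sqrtr0 // => i _; rewrite mxE mul0r.
move=> y [x Hx <-]; apply: le_trans (Hall l k x) _.
rewrite -[X in _ <= X]mulr1; apply: ler_wpM2l => //.
by rewrite exprn_ge0 // sqrtr_ge0.
Qed.
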